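(* Let $1<n\le d$. Let $\mathrm{Stationary}:(\mathbb{R}^d)^{n+1}\to\{\mathsf{true},\mathsf{false}\}$ be a first-order stationarity condition that is necessary, i.e. for every smooth preference function $f_0:\mathbb{R}^d\to\mathbb{R}$, every collection of smooth strongly convex objectives $f_1,\dots,f_n:\mathbb{R}^d\to\mathbb{R}$, and every $x$ that is preference optimal for $(f_0,f_1,\dots,f_n)$, one has $\mathrm{Stationary}(\nabla f_0(x),\nabla f_1(x),\dots,\nabla f_n(x))=\mathsf{true}$. Then $\mathrm{Stationary}$ is trivial in the following sense: for any preference generic set of vectors $v_0,\dots,v_n\in\mathbb{R}^d$, $\mathrm{Stationary}(v_0,\dots,v_n)=\mathsf{true}$.
   Context: $\Delta^{n-1}$ is the simplex of convex weights in $\mathbb{R}^n$. For objectives $F=(f_1,\dots,f_n)$, a point $x$ is Pareto optimal if for all $x'$, $f_i(x')<f_i(x)$ for some $i$ implies $f_j(x')>f_j(x)$ for some $j$; $\mathrm{Pareto}(F)$ denotes the set of Pareto optimal points. A point $x\in\mathrm{Pareto}(F)$ is preference optimal (for preference $f_0$) if $f_0(x)\le f_0(x')$ for all $x'\in\mathrm{Pareto}(F)$. A set $\{v_0,v_1,\dots,v_n\}\subset\mathbb{R}^d$ with $1<n\le d$ is preference generic if there is a unique $\beta\in\Delta^{n-1}$ with $\beta_1v_1+\dots+\beta_nv_n=0$, and $v_0\notin\mathrm{span}(v_1,\dots,v_n)$. *)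

(* Defs.v *)
From HB Require Import structures.
From mathcomp Require Import all_boot all_order all_algebra.
From mathcomp Require Import all_classical all_reals all_analysis.
Set Implicit Arguments. Unset Strict Implicit. Unset Printing Implicit Defensive.
Import Order.TTheory GRing.Theory Num.Theory.
Import numFieldNormedType.Exports.
Local Open Scope ring_scope.

Section Defs.
Variables (R : realType) (d : nat).
Local Notation V := 'rV[R]_d.

Fixpoint Ck (k : nat) (f : V -> R) : Prop :=
  match k with
  | 0 => continuous f
  | k'.+1 => (forall x, differentiable f x) /\ (forall u : V, Ck k' (fun x => derive f x u))
  end.

Definition smooth (f : V -> R) : Prop := forall k, Ck k f.

Definition sqnorm (u : V) : R := \sum_(i < d) u ord0 i ^+ 2.

Definition strongly_convex (f : V -> R) : Prop :=
  exists m : R, 0 < m /\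
    forall (x y : V) (t : R), 0 <= t -> t <= 1 ->
      f (t *: x + (1 - t) *: y)
        <= t * f x + (1 - t) * f y - m / 2 * t * (1 - t) * sqnorm (x - y).

Definition grad (f : V -> R) (x : V) : V :=
  \row_(i < d) derive f x (delta_mx ord0 i : V).

Variable n : nat.

Definition pareto_optimal (f : 'I_n -> V -> R) (x : V) : Prop :=
  forall x' : V, (exists i, f i x' < f i x) -> exists j, f j x' > f j x.

Definition preference_optimal (f0 : V -> R) (f : 'I_n -> V -> R) (x : V) : Prop :=
  pareto_optimal f x /\ forall x', pareto_optimal f x' -> f0 x <= f0 x'.

Definition in_simplex (b : 'I_n -> R) : Prop :=
  (forall i, 0 <= b i) /\ \sum_(i < n) b i = 1.

Definition preference_generic (v0 : V) (v : 'I_n -> V) : Prop :=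
  (exists b, in_simplex b /\ \sum_(i < n) b i *: v i = 0 /\
     forall b', in_simplex b' -> \sum_(i < n) b' i *: v i = 0 -> forall i, b' i = b i)
  /\ ~ (exists c : 'I_n -> R, v0 = \sum_(i < n) c i *: v i).

End Defs.

(* Main.v *)
Require Import Defs.
From HB Require Import structures.
From mathcomp Require Import all_boot all_order all_algebra.
From mathcomp Require Import all_classical all_reals all_analysis.
From mathcomp Require Import ring lra.
Set Implicit Arguments. Unset Strict Implicit. Unset Printing Implicit Defensive.
Import Order.TTheory GRing.Theory Num.Theory.
Import numFieldNormedType.Exports.
Local Open Scope ring_scope.

Section Helpers.
Variables (R : realType) (d : nat).
Local Notation V := 'rV[R]_d.

Inductive pol : (V -> R) -> Prop :=
| pol_cst c : pol (fun _ => c)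
| pol_crd k : pol (fun x => x ord0 k)
| pol_add f g : pol f -> pol g -> pol (fun x => f x + g x)
| pol_mul f g : pol f -> pol g -> pol (fun x => f x * g x).

Lemma pol_ext f g : pol f -> (forall x, f x = g x) -> pol g.
Proof. by move=> pf e; have -> : g = f by apply/funext => x; rewrite e. Qed.

Lemma derive_coord (x u : V) k : derive (fun y : V => y ord0 k) x u = u ord0 k.
Proof.
have @f : {linear V -> R}.
  by exists (fun N : V => N ord0 k); do 2![eexists]; do ?[constructor];
     rewrite ?mxE// => ? *; rewrite ?mxE//; move=> ?; rewrite !mxE.
rewrite (_ : (fun _ => _) = f) //.
rewrite deriveE; last exact/linear_differentiable/coord_continuous.
by rewrite diff_lin //; exact: coord_continuous.
Qed.

Lemma pol_diff f : pol f -> forall x, differentiable f x.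
Proof.
elim=> [c|k|f1 g1 _ IH1 _ IH2|f1 g1 _ IH1 _ IH2] x.
- exact: differentiable_cst.
- exact: differentiable_coord.
- exact: (differentiableD (IH1 x) (IH2 x)).
- exact: (differentiableM (IH1 x) (IH2 x)).
Qed.

Lemma pol_der f : pol f -> forall u, pol (fun x => derive f x u).
Proof.
elim=> [c|k|f1 g1 p1 IH1 p2 IH2|f1 g1 p1 IH1 p2 IH2] u.
- apply: (pol_ext (pol_cst 0)) => x.
  by rewrite (_ : (fun _ => c) = cst c) // derive_cst.
- by apply: (pol_ext (pol_cst (u ord0 k))) => x; rewrite derive_coord.
- apply: (pol_ext (pol_add (IH1 u) (IH2 u))) => x.
  rewrite (_ : (fun x => f1 x + g1 x) = f1 + g1) //.
  by rewrite deriveD //; apply: diff_derivable; apply: pol_diff.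
- apply: (pol_ext (pol_add (pol_mul p1 (IH2 u)) (pol_mul p2 (IH1 u)))) => x.
  rewrite (_ : (fun x => f1 x * g1 x) = f1 * g1) //.
  by rewrite deriveM //; apply: diff_derivable; apply: pol_diff.
Qed.

Lemma pol_Ck k : forall f, pol f -> Ck k f.
Proof.
elim: k => [|k IH] f pf /=.
  by move=> x; apply: differentiable_continuous; apply: pol_diff.
split; first exact: pol_diff.
by move=> u; apply: IH; apply: pol_der.
Qed.

Lemma pol_smooth f : pol f -> smooth f.
Proof. by move=> pf k; apply: pol_Ck. Qed.

End Helpers.

Section Helpers2.
Variables (R : realType) (d : nat).
Local Notation V := 'rV[R]_d.

Definition dot (x y : V) : R := \sum_(k < d) x ord0 k * y ord0 k.

Lemma dotC x y : dot x y = dot y x.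
Proof. by apply: eq_bigr => k _; rewrite mulrC. Qed.

Lemma dotDr x y z : dot x (y + z) = dot x y + dot x z.
Proof. by rewrite /dot -big_split; apply: eq_bigr => k _; rewrite mxE mulrDr. Qed.

Lemma dotZr x a y : dot x (a *: y) = a * dot x y.
Proof. by rewrite /dot mulr_sumr; apply: eq_bigr => k _; rewrite mxE mulrCA. Qed.

Lemma dotNr x y : dot x (- y) = - dot x y.
Proof. by rewrite /dot -sumrN; apply: eq_bigr => k _; rewrite mxE mulrN. Qed.

Lemma dotBr x y z : dot x (y - z) = dot x y - dot x z.
Proof. by rewrite dotDr dotNr. Qed.

Lemma dotDl x y z : dot (y + z) x = dot y x + dot z x.
Proof. by rewrite dotC dotDr !(dotC x). Qed.
Lemma dotZl x a y : dot (a *: y) x = a * dot y x.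
Proof. by rewrite dotC dotZr dotC. Qed.
Lemma dotBl x y z : dot (y - z) x = dot y x - dot z x.
Proof. by rewrite dotC dotBr !(dotC x). Qed.
Lemma dot0r x : dot x 0 = 0.
Proof. by rewrite /dot big1 // => k _; rewrite mxE mulr0. Qed.
Lemma dot0l x : dot 0 x = 0.
Proof. by rewrite dotC dot0r. Qed.

Lemma dot_suml n (b : 'I_n -> R) (v : 'I_n -> V) x :
  dot (\sum_(i < n) b i *: v i) x = \sum_(i < n) b i * dot (v i) x.
Proof.
rewrite /dot; under eq_bigr do rewrite summxE mulr_suml.
rewrite exchange_big /=; apply: eq_bigr => i _; rewrite mulr_sumr.
by apply: eq_bigr => k _; rewrite mxE mulrA.
Qed.

Lemma sqnorm_dot x : sqnorm x = dot x x.
Proof. by apply: eq_bigr => k _; rewrite expr2. Qed.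

Lemma dot_delta a j : dot a (delta_mx ord0 j) = a ord0 j.
Proof.
rewrite /dot (bigD1 j) //= big1 ?addr0; first by rewrite mxE !eqxx mulr1.
by move=> k /negbTE kj; rewrite mxE kj andbF mulr0.
Qed.

Lemma dot_self_ge0 x : 0 <= dot x x.
Proof. by apply: sumr_ge0 => k _; rewrite -expr2 sqr_ge0. Qed.


Lemma pol_sum (F : 'I_d -> V -> R) : (forall k, pol (F k)) ->
  pol (fun x => \sum_(k < d) F k x).
Proof.
move=> pF.
suff : forall s, pol (fun x => \sum_(k <- s) F k x) by apply.
elim=> [|k s IH].
  by apply: (pol_ext (pol_cst _ 0)) => x; rewrite big_nil.
by apply: (pol_ext (pol_add (pF k) IH)) => x; rewrite big_cons.
Qed.

Lemma derive_sum_pol (F : 'I_d -> V -> R) y u : (forall k, pol (F k)) ->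
  derive (fun x => \sum_(k < d) F k x) y u = \sum_(k < d) derive (F k) y u.
Proof.
move=> pF.
suff : forall s, derive (fun x => \sum_(k <- s) F k x) y u = \sum_(k <- s) derive (F k) y u by apply.
elim=> [|k s IH].
  rewrite big_nil (_ : (fun _ => _) = cst 0) ?derive_cst //.
  by apply/funext => x; rewrite big_nil.
rewrite big_cons -IH.
rewrite (_ : (fun _ => _) = F k + (fun x => \sum_(j <- s) F j x)); last first.
  by apply/funext => x; rewrite big_cons.
rewrite deriveD //; apply: diff_derivable; apply: pol_diff => //.
suff : forall s, pol (fun x => \sum_(k <- s) F k x) by apply.
elim=> [|j t IH'].
  by apply: (pol_ext (pol_cst _ 0)) => x; rewrite big_nil.
by apply: (pol_ext (pol_add (pF j) IH')) => x; rewrite big_cons.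
Qed.

Lemma pol_dot a : pol (fun x : V => dot a x).
Proof. by apply: pol_sum => k; apply: pol_mul; [apply: pol_cst|apply: pol_crd]. Qed.

Lemma derive_dot a y u : derive (fun x : V => dot a x) y u = dot a u.
Proof.
rewrite /dot derive_sum_pol; last by move=> k; apply: pol_mul; [apply: pol_cst|apply: pol_crd].
apply: eq_bigr => k _.
rewrite (_ : (fun _ => _) = cst (a ord0 k) * (fun x : V => x ord0 k)) //.
rewrite deriveM ?derive_cst ?derive_coord /=; first by rewrite scaler0 addr0.
  exact: derivable_cst.
by apply: diff_derivable; apply: differentiable_coord.
Qed.

Lemma derive_mul f g y u : pol f -> pol g ->
  derive (fun x : V => f x * g x) y u = f y * derive g y u + g y * derive f y u.
Proof.
move=> pf pg; rewrite (_ : (fun _ => _) = f * g) //.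
by rewrite deriveM //; apply: diff_derivable; apply: pol_diff.
Qed.

Lemma derive_add f g y u : pol f -> pol g ->
  derive (fun x : V => f x + g x) y u = derive f y u + derive g y u.
Proof.
move=> pf pg; rewrite (_ : (fun _ => _) = f + g) //.
by rewrite deriveD //; apply: diff_derivable; apply: pol_diff.
Qed.

End Helpers2.

Section Helpers3.
Variables (R : realType) (d : nat).
Local Notation V := 'rV[R]_d.

Lemma dot_self_eq0 (x : V) : dot x x = 0 -> x = 0.
Proof.
move=> /eqP; rewrite psumr_eq0; last by move=> k _; rewrite -expr2 sqr_ge0.
move=> /allP H; apply/rowP => k; rewrite mxE.
have := H k (mem_index_enum k); rewrite -expr2 sqrf_eq0 => /eqP.
by rewrite (ord1 ord0).
Qed.

Lemma orth_exists n (v0 : V) (v : 'I_n -> V) :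
  ~ (exists c : 'I_n -> R, v0 = \sum_(i < n) c i *: v i) ->
  exists w : V, (forall i, dot (v i) w = 0) /\ dot v0 w != 0.
Proof.
move=> nspan.
pose S : 'M[R]_(n, d) := \matrix_(i < n, k < d) v i ord0 k.
pose K := cokermx S.
have nsub : ~~ (v0 <= S)%MS.
  apply/negP => /submxP [D eD]; apply: nspan; exists (fun i => D ord0 i).
  rewrite eD mulmx_sum_row; apply: eq_bigr => i _; congr (_ *: _).
  by apply/rowP => k; rewrite !mxE.
have : v0 *m K != 0 by rewrite -submxE.
case/eqP/matrixP/boolp.existsNP => i /boolp.existsNP [j /eqP nz].
exists (\row_(k < d) K k j); split.
  move=> l; have /matrixP/(_ l j) := mulmx_coker S.
  rewrite !mxE => <-; rewrite /dot; apply: eq_bigr => k _; by rewrite !mxE.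
move: nz; rewrite (ord1 i) !mxE => nz.
by rewrite /dot; under eq_bigr do rewrite mxE.
Qed.

End Helpers3.

Section Helpers4.
Variables (R : realType) (d : nat).
Local Notation V := 'rV[R]_d.

Lemma pol_dotself : pol (fun x : V => dot x x).
Proof. by apply: pol_sum => k; apply: pol_mul; apply: pol_crd. Qed.

Lemma derive_dotself (y u : V) : derive (fun x : V => dot x x) y u = 2 * dot y u.
Proof.
rewrite /dot derive_sum_pol; last by move=> k; apply: pol_mul; apply: pol_crd.
rewrite mulr_sumr; apply: eq_bigr => k _.
rewrite (derive_mul (f := fun x : V => x ord0 k) (g := fun x : V => x ord0 k));
  try apply: pol_crd.
by rewrite !derive_coord; ring.
Qed.

Lemma dotNl (x y : V) : dot (- y) x = - dot y x.
Proof. by rewrite dotC dotNr dotC. Qed.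

Lemma derive_cstf (h : R) (y u : V) : derive (fun _ : V => h) y u = 0.
Proof. by rewrite (_ : (fun _ => h) = cst h) // derive_cst. Qed.

Definition qf (p : V) (c : R) (x : V) : R :=
  dot x x * 2^-1 + dot p x * dot p x * (2 * c)^-1.

Lemma pol_qf p c : pol (qf p c).
Proof.
apply: (pol_ext (pol_add (pol_mul pol_dotself (pol_cst _ _))
   (pol_mul (pol_mul (pol_dot p) (pol_dot p)) (pol_cst _ _)))) => x.
by rewrite /qf.
Qed.

Lemma derive_qf0 p c u : derive (qf p c) 0 u = 0.
Proof.
rewrite (_ : qf p c = fun x => (dot x x * 2^-1) + (dot p x * dot p x * (2 * c)^-1)) //.
rewrite (derive_add (f := fun x => dot x x * 2^-1)); last first.
- by apply: pol_mul; [apply: pol_mul; apply: pol_dot|apply: pol_cst].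
- by apply: pol_mul; [apply: pol_dotself|apply: pol_cst].
rewrite (derive_mul (f := fun x => dot x x)); [|exact: pol_dotself|exact: pol_cst].
rewrite (derive_mul (f := fun x => dot p x * dot p x)); last first.
- exact: pol_cst.
- by apply: pol_mul; apply: pol_dot.
rewrite (derive_mul (f := fun x => dot p x)); try apply: pol_dot.
by rewrite !derive_cstf derive_dotself !dot0r dot0l !(mul0r, mulr0, addr0).
Qed.

End Helpers4.

Theorem proposition3 (R : realType) (n d : nat) (hn : (1 < n)%N) (hnd : (n <= d)%N)
  (Stationary : 'rV[R]_d -> ('I_n -> 'rV[R]_d) -> bool)
  (Hnec : forall (f0 : 'rV[R]_d -> R) (f : 'I_n -> 'rV[R]_d -> R) (x : 'rV[R]_d),
     smooth f0 -> (forall i, smooth (f i)) -> (forall i, strongly_convex (f i)) ->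
     preference_optimal f0 f x ->
     Stationary (grad f0 x) (fun i => grad (f i) x))
  (v0 : 'rV[R]_d) (v : 'I_n -> 'rV[R]_d) :
  preference_generic v0 v -> Stationary v0 v.
Proof.
move=> [[b [[hb0 hb1] [hsum _]]] nspan].
have [w [hw hs]] := orth_exists nspan.
set s := dot v0 w in hs.
pose W := dot w w + 1.
have W0 : 0 < W by rewrite /W ltr_wpDl ?dot_self_ge0.
pose a := (s / W) *: w.
pose p := v0 - a.
pose c := dot a p.
have hva i : dot (v i) a = 0 by rewrite /a dotZr hw mulr0.
have ec : c = s ^+ 2 / W ^+ 2.
  rewrite /c /p dotBr /a !dotZl !dotZr (dotC w v0) -/s.
  have -> : dot w w = W - 1 by rewrite /W addrK.
  by field; rewrite gt_eqF.
have c0 : 0 < c.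
  rewrite ec; apply: divr_gt0; last exact: exprn_gt0.
  by rewrite lt0r sqrf_eq0 hs sqr_ge0.
pose K := dot a a + c.
have eK : K = dot a v0 by rewrite /K /c /p dotBr addrC subrK.
have K0 : 0 < K by rewrite /K ltr_wpDl ?dot_self_ge0.
pose f0 := fun x : 'rV[R]_d => dot v0 x.
pose f := fun (i : 'I_n) (x : 'rV[R]_d) => dot (v i) x + qf p c x.
have pf i : pol (f i) by apply: (pol_ext (pol_add (pol_dot (v i)) (pol_qf p c))).
have Hf0 : grad f0 0 = v0.
  by apply/rowP => j; rewrite mxE derive_dot dot_delta.
have Hf : (fun i => grad (f i) 0) = v.
  apply/funext => i; apply/rowP => j; rewrite mxE.
  rewrite (derive_add (f := fun x => dot (v i) x) (g := qf p c)) ?derive_dot ?derive_qf0 ?addr0 ?dot_delta //.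
    exact: pol_dot.
  exact: pol_qf.
rewrite -Hf0 -Hf; apply: Hnec.
- exact/pol_smooth/pol_dot.
- by move=> i; apply/pol_smooth.
- move=> i; exists 1; split => // x y t t0 t1.
  rewrite /f /qf sqnorm_dot !(dotDr, dotDl, dotZr, dotZl, dotNr, dotNl) (dotC y x).
  rewrite -subr_ge0.
  match goal with |- is_true (_ <= ?e) => have E : e = t * (1 - t) * (2 * c)^-1 * ((dot v0 x - s / W * dot w x) - (dot v0 y - s / W * dot w y)) ^+ 2 end.
    ring.
  rewrite E.
  apply: mulr_ge0; last exact: sqr_ge0.
  apply: mulr_ge0; last by rewrite invr_ge0 mulr_ge0 // ltW.
  by apply: mulr_ge0 => //; rewrite subr_ge0.
- have f00 j : f j 0 = 0 by rewrite /f /qf !(dot0r, mul0r, mulr0, addr0).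
  split.
  + move=> x' [i hi].
    case: (boolP [exists j, f j 0 < f j x']) => [/existsP [j hj]|/existsPn hn']; first by exists j.
    exfalso.
    have hle j : f j x' <= 0 by rewrite -(f00 j) leNgt; apply: hn'.
    have : \sum_(j < n) b j * f j x' <= \sum_(j < n) (0 : R).
      by apply: ler_sum => j _; exact: mulr_ge0_le0 (hb0 j) (hle j).
    rewrite big1_eq.
    rewrite /f; under eq_bigr do rewrite mulrDr.
    rewrite big_split /= -mulr_suml hb1 mul1r.
    rewrite -dot_suml hsum dot0l add0r /qf => hq.
    have h1 := dot_self_ge0 x'.
    have h2 : 0 <= dot p x' * dot p x' * (2 * c)^-1.
      apply: mulr_ge0; first by rewrite -expr2 sqr_ge0.
      by rewrite invr_ge0 mulr_ge0 // ltW.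
    have /dot_self_eq0 ex : dot x' x' = 0 by lra.
    by move: hi; rewrite ex ltxx.
  + move=> x' px'; rewrite /f0 dot0r leNgt; apply/negP => he.
    set e := dot v0 x' in he.
    pose t := - e / K.
    pose y := x' + t *: a.
    have hpx : dot p x' = e - dot a x' by rewrite /p dotBl.
    have hpa : dot p a = c by rewrite /c dotC.
    clearbody a p c.
    have hy j : f j y = f j x' + (t * e + t ^+ 2 * K / 2).
      rewrite /f /qf /y !(dotDr, dotDl, dotZr, dotZl) hva hpx hpa (dotC x' a) /K.
      by field; rewrite gt_eqF.
    have hneg : t * e + t ^+ 2 * K / 2 < 0.
      have -> : t * e + t ^+ 2 * K / 2 = - (e ^+ 2 / (2 * K)).
        by rewrite /t; field; rewrite gt_eqF.
      rewrite oppr_lt0; apply: divr_gt0; last by rewrite mulr_gt0.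
      by rewrite lt0r sqrf_eq0 (lt_eqF he) sqr_ge0.
    have [|j hj] := px' y.
      by exists (Ordinal (ltnW hn)); rewrite hy; lra.
    move: hj; rewrite hy; lra.
Qed.
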